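(* Suppose that $SI$, $UI$, $CI$ define a nonnegative bivariate information decomposition, and suppose that $SI$ and $UI$ are left monotonic. Then for any finite-valued random variables $X_1,X_2$ and any function $f$ on the alphabet of the pair $(X_1,X_2)$, $$SI(f(X_1,X_2);X_1,X_2)\le I(X_1;X_2).$$
   Context: All random variables have finite alphabets. A nonnegative bivariate information decomposition consists of nonnegative functions $SI(S;X_1,X_2)$, $UI(S;X_1\setminus X_2)$, $UI(S;X_2\setminus X_1)$, $CI(S;X_1,X_2)$, defined for every joint distribution of $(S,X_1,X_2)$ with arbitrary finite alphabets and depending continuously on it, such that $I(S;X_1X_2)=SI(S;X_1,X_2)+CI(S;X_1,X_2)+UI(S;X_1\setminus X_2)+UI(S;X_2\setminus X_1)$, $I(S;X_1)=SI(S;X_1,X_2)+UI(S;X_1\setminus X_2)$ and $I(S;X_2)=SI(S;X_1,X_2)+UI(S;X_2\setminus X_1)$, where $I$ denotes mutual information. Left monotonicity of $SI$: $SI(S;X_1,X_2)\ge SI(g(S);X_1,X_2)$ for all $(S,X_1,X_2)$ and every function $g$ on the alphabet of $S$. Left monotonicity of $UI$: $UI(S;X_1\setminus X_2)\ge UI(g(S);X_1\setminus X_2)$ and $UI(S;X_2\setminus X_1)\ge UI(g(S);X_2\setminus X_1)$ for all $(S,X_1,X_2)$ and every function $g$ on the alphabet of $S$. *)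

(* Defs.v *)
From mathcomp Require Import all_boot all_order all_algebra.
From mathcomp Require Import all_classical all_reals all_analysis.
Set Implicit Arguments. Unset Strict Implicit. Unset Printing Implicit Defensive.
Import Order.TTheory GRing.Theory Num.Theory.
Local Open Scope ring_scope.

Section InfoDecomp.
Variable R : realType.

Definition is_dist (T : finType) (p : {ffun T -> R}) : Prop :=
  (forall t, 0 <= p t) /\ \sum_t p t = 1.

Definition push (T U : finType) (f : T -> U) (p : {ffun T -> R}) : {ffun U -> R} :=
  [ffun u => \sum_(t | f t == u) p t].

(* Mutual information I(A;B) of a joint pmf on A * B (natural log,
   convention 0 log 0 = 0). *)
Definition MI (A B : finType) (p : {ffun A * B -> R}) : R :=
  \sum_(ab : A * B | p ab != 0)
     p ab * ln (p ab / (push fst p ab.1 * push snd p ab.2)).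

(* Joint distributions of (S, X1, X2) are pmfs on S * X1 * X2 = (S*X1)*X2. *)
Definition infofun := forall S X1 X2 : finType, {ffun S * X1 * X2 -> R} -> R.

Definition MI_S_X12 (S X1 X2 : finType) (p : {ffun S * X1 * X2 -> R}) : R :=
  MI (push (fun t : S * X1 * X2 => (t.1.1, (t.1.2, t.2))) p).
Definition MI_S_X1 (S X1 X2 : finType) (p : {ffun S * X1 * X2 -> R}) : R :=
  MI (push (fun t : S * X1 * X2 => t.1) p).
Definition MI_S_X2 (S X1 X2 : finType) (p : {ffun S * X1 * X2 -> R}) : R :=
  MI (push (fun t : S * X1 * X2 => (t.1.1, t.2)) p).

Definition swap12 (S X1 X2 : finType) (p : {ffun S * X1 * X2 -> R})
  : {ffun S * X2 * X1 -> R} :=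
  push (fun t : S * X1 * X2 => (t.1.1, t.2, t.1.2)) p.

Definition lmap (S S' X1 X2 : finType) (g : S -> S') (p : {ffun S * X1 * X2 -> R})
  : {ffun S' * X1 * X2 -> R} :=
  push (fun t : S * X1 * X2 => (g t.1.1, t.1.2, t.2)) p.

(* SI F  = SI(S;X1,X2);  UI S X1 X2 p = UI(S;X1\X2);
   UI(S;X2\X1) = UI S X2 X1 (swap12 p);  CI = CI(S;X1,X2). *)
Definition UI12 (UI : infofun) (S X1 X2 : finType) (p : {ffun S * X1 * X2 -> R}) : R :=
  UI S X1 X2 p.
Definition UI21 (UI : infofun) (S X1 X2 : finType) (p : {ffun S * X1 * X2 -> R}) : R :=
  UI S X2 X1 (swap12 p).

Definition continuous_on_dists (F : infofun) : Prop :=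
  forall (S X1 X2 : finType) (p : {ffun S * X1 * X2 -> R}), is_dist p ->
  forall e : R, 0 < e -> exists2 d : R, 0 < d &
    forall q : {ffun S * X1 * X2 -> R}, is_dist q ->
      (forall t, `|q t - p t| < d) -> `|F S X1 X2 q - F S X1 X2 p| < e.

Definition nonneg_on_dists (F : infofun) : Prop :=
  forall (S X1 X2 : finType) (p : {ffun S * X1 * X2 -> R}), is_dist p ->
    0 <= F S X1 X2 p.

Record nonneg_info_decomp (SI UI CI : infofun) : Prop := {
  nid_SI_ge0 : nonneg_on_dists SI;
  nid_UI_ge0 : nonneg_on_dists UI;
  nid_CI_ge0 : nonneg_on_dists CI;
  nid_SI_cont : continuous_on_dists SI;
  nid_UI_cont : continuous_on_dists UI;
  nid_CI_cont : continuous_on_dists CI;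
  nid_total : forall (S X1 X2 : finType) (p : {ffun S * X1 * X2 -> R}), is_dist p ->
    MI_S_X12 p = SI S X1 X2 p + CI S X1 X2 p + UI12 UI p + UI21 UI p;
  nid_X1 : forall (S X1 X2 : finType) (p : {ffun S * X1 * X2 -> R}), is_dist p ->
    MI_S_X1 p = SI S X1 X2 p + UI12 UI p;
  nid_X2 : forall (S X1 X2 : finType) (p : {ffun S * X1 * X2 -> R}), is_dist p ->
    MI_S_X2 p = SI S X1 X2 p + UI21 UI p
}.

Definition SI_left_monotonic (SI : infofun) : Prop :=
  forall (S S' X1 X2 : finType) (g : S -> S') (p : {ffun S * X1 * X2 -> R}),
    is_dist p -> SI S' X1 X2 (lmap g p) <= SI S X1 X2 p.

Definition UI_left_monotonic (UI : infofun) : Prop :=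
  forall (S S' X1 X2 : finType) (g : S -> S') (p : {ffun S * X1 * X2 -> R}),
    is_dist p ->
    UI12 UI (lmap g p) <= UI12 UI p /\ UI21 UI (lmap g p) <= UI21 UI p.

End InfoDecomp.

(* Main.v *)
Require Import Defs.
From mathcomp Require Import all_boot all_order all_algebra.
From mathcomp Require Import all_classical all_reals all_analysis.
From mathcomp Require Import lra.
Import Order.TTheory GRing.Theory Num.Theory.
Local Open Scope ring_scope.

Section H.
Variable R : realType.

Lemma push_comp' (T U V : finType) (h : T -> U) (g : U -> V) (k : T -> V)
  (q : {ffun T -> R}) : (forall t, g (h t) = k t) ->
  push g (push h q) = push k q.
Proof.
move=> hk; apply/ffunP => v; rewrite !ffunE.
under eq_bigr do rewrite ffunE.
rewrite [RHS](partition_big h (fun u => g u == v)); last by move=> t; rewrite hk.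
apply: eq_bigr => u /eqP guv; apply: eq_bigl => t.
apply/idP/idP; last by case/andP.
by move=> /eqP htu; rewrite -hk htu guv !eqxx.
Qed.

Lemma push_id (T : finType) (h : T -> T) (q : {ffun T -> R}) :
  (forall t, h t = t) -> push h q = q.
Proof.
move=> hid; apply/ffunP => v; rewrite ffunE.
rewrite (big_pred1 v) // => t /=; by rewrite hid.
Qed.

Lemma sum_push (T U : finType) (h : T -> U) (q : {ffun T -> R}) :
  \sum_u push h q u = \sum_t q t.
Proof.
rewrite (partition_big h predT) //=.
by apply: eq_bigr => u _; rewrite ffunE.
Qed.

Lemma push_dist (T U : finType) (h : T -> U) (q : {ffun T -> R}) :
  is_dist q -> is_dist (push h q).
Proof.
case=> q0 q1; split; last by rewrite sum_push.
by move=> u; rewrite ffunE; apply: sumr_ge0.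
Qed.

Lemma sum_push_inj (T U : finType) (h : T -> U) (q : {ffun T -> R})
  (F : U -> R -> R) : injective h -> (forall u, F u 0 = 0) ->
  \sum_u F u (push h q u) = \sum_t F (h t) (q t).
Proof.
move=> hinj F0.
rewrite (partition_big h predT) //=.
apply: eq_bigr => u _; rewrite ffunE.
case: (pickP (fun t => h t == u)) => [t /eqP <-|none].
  rewrite (big_pred1 t); last by move=> t'; rewrite /= (inj_eq hinj).
  by rewrite (big_pred1 t) // => t'; rewrite /= (inj_eq hinj).
by rewrite !big_pred0 // F0.
Qed.

Lemma MI_push_inj (A B : finType) (T : finType) (h : T -> A * B) (q : {ffun T -> R}) :
  injective h ->
  MI (push h q) = \sum_t (if q t != 0 then q t * ln (q t /
     (push (fun x => (h x).1) q (h t).1 * push (fun x => (h x).2) q (h t).2)) else 0).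
Proof.
move=> hinj; rewrite /MI big_mkcond /=.
rewrite (@sum_push_inj _ _ h q (fun ab r => if r != 0 then r * ln (r / (push fst (push h q) ab.1 * push snd (push h q) ab.2)) else 0)) //; last by move=> u; rewrite eqxx.
apply: eq_bigr => t _.
by rewrite (@push_comp' _ _ _ h fst (fun x => (h x).1)) // (@push_comp' _ _ _ h snd (fun x => (h x).2)).
Qed.


Lemma H_eq (X1 X2 : finType) (q : {ffun X1 * X2 -> R}) :
  MI (push (fun x : X1 * X2 => (x, x.1)) q) =
  MI (push (fun a : X1 => (a, a)) (push (fun x : X1 * X2 => x.1) q)).
Proof.
rewrite !MI_push_inj; last by move=> a b; case.
  2: by move=> a b; case.
rewrite (@push_id _ (fun x => (x, x.1).1)) //=.
set m := push (fun x : X1 * X2 => x.1) q.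
rewrite (@push_comp' _ _ _ (fun x : X1 * X2 => x.1) (fun a => (a, a).2) (fun x => (x, x.1).2)) //=.
have E : forall x y : R, (if x != 0 then x * ln (x / (x * y)) else 0) = x * ln y^-1.
  move=> x y; have [->|x0] := eqVneq x 0; first by rewrite /= mul0r.
  by rewrite /= invfM mulrA mulfV // mul1r.
under eq_bigr do rewrite E.
under [RHS]eq_bigr do rewrite E.
rewrite -/m.
rewrite (partition_big (fun x : X1 * X2 => x.1) predT) //=.
apply: eq_bigr => a _; rewrite /m ffunE big_distrl /=.
by apply: eq_bigr => t /eqP <-; rewrite ffunE.
Qed.

End H.
Arguments push_comp' {R T U V} h g k {q}.
Arguments push_id {R T} h {q}.
Arguments push_dist {R T U} h {q}.

Theorem proposition1 (R : realType) (SI UI CI : infofun R) :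
  nonneg_info_decomp SI UI CI ->
  SI_left_monotonic SI -> UI_left_monotonic UI ->
  forall (X1 X2 Y : finType) (q : {ffun X1 * X2 -> R}) (f : X1 * X2 -> Y),
    is_dist q ->
    SI Y X1 X2 (push (fun x : X1 * X2 => (f x, x.1, x.2)) q) <= MI q.
Proof.
move=> D SImono UImono X1 X2 Y q f qd.
set p := push (fun x : X1 * X2 => (x, x.1, x.2)) q.
have pd : is_dist p by apply: push_dist.
have -> : push (fun x : X1 * X2 => (f x, x.1, x.2)) q = lmap f p.
  by rewrite /lmap /p (push_comp' _ _ (fun x : X1 * X2 => (f x, x.1, x.2))).
set p1 := lmap (fun x : X1 * X2 => x.1) p.
have p1d : is_dist p1 by apply: push_dist.
have h1 := SImono _ _ _ _ f p pd.
have [hu1 _] := UImono _ _ _ _ (fun x : X1 * X2 => x.1) p pd.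
have e1 := nid_X1 D pd.
have e2 := nid_X1 D p1d.
have e3 := nid_X2 D p1d.
have u21 : 0 <= UI21 UI p1 by apply: (nid_UI_ge0 D); apply: push_dist.
have m1 : MI_S_X1 p = MI_S_X1 p1.
  rewrite /MI_S_X1 /p1 /lmap /p.
  rewrite (push_comp' _ _ (fun x : X1 * X2 => (x, x.1))) //.
  rewrite (push_comp' _ _ (fun x : X1 * X2 => (x.1, x.1, x.2))) //.
  rewrite (push_comp' _ _ (fun x : X1 * X2 => (x.1, x.1))) //.
  rewrite -(push_comp' (fun x : X1 * X2 => x.1) (fun a : X1 => (a, a))) //.
  exact: H_eq.
have m2 : MI_S_X2 p1 = MI q.
  rewrite /MI_S_X2 /p1 /lmap /p.
  rewrite (push_comp' _ _ (fun x : X1 * X2 => (x.1, x.1, x.2))) //.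
  rewrite (push_comp' _ _ (fun x : X1 * X2 => (x.1, x.2))) //.
  by rewrite push_id // => -[].
have u12 : 0 <= UI12 UI p1 by apply: (nid_UI_ge0 D).
rewrite /UI12 in e1 e2 hu1 u12.
lra.
Qed.
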